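(* Let $\Omega$ be a finite subset of $\mathbb{Z}^d\setminus\{0\}$ invariant under all symmetries of $\mathbb{Z}^d$, let $\phi:\mathbb{Z}_{\ge 0}\to[0,\infty)$ satisfy $\phi(0)=\phi(1)=0$ and $\phi(a+b)\ge\phi(a)+\phi(b)$, and let $\rho$ be a probability mass function on $\Omega$ invariant under all symmetries of $\mathbb{Z}^d$. For every $n\ge1$ and every set $A$ of bridges of length $n$, $$\mathbb{P}_{\mathrm{B}_n}(A)=\mathbb{P}_{\mathrm{iB}}^{\otimes\mathbb{N}}\big((\gamma(i))_{i=0}^n\in A\ \big|\ n\in R_\gamma\big).$$
   Context: Walks: sequences $\gamma=(\gamma(i))$ in $\mathbb{Z}^d$ with increments in $\Omega$; $\mathrm{W}_n$ the walks of length $n$ from $0$. With $l_v(\gamma)=\#\{k:\gamma(k)=v\}$, $\sigma(\gamma)=\prod_{v}e^{-\phi(l_v(\gamma))}\prod_{i=1}^n\rho(\gamma(i)-\gamma(i-1))$; $Z_n=\sum_{\mathrm{W}_n}\sigma$, $\lambda_0=\lim_n\tfrac1n\log Z_n$. $x(v)$ is the first coordinate. A bridge of length $n$ is $\gamma\in\mathrm{W}_n$ with $x(\gamma(0))<x(\gamma(i))\le x(\gamma(n))$ for $1\le i\le n$; $\mathrm{B}_n$ is the set of these, and $\mathbb{P}_{\mathrm{B}_n}(\gamma)=\sigma(\gamma)/\sum_{\gamma'\in\mathrm{B}_n}\sigma(\gamma')$. A renewal time of a bridge of length $n$ is $i\in\{1,\dots,n-1\}$ with $x(\gamma(i))<x(\gamma(k))$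 for $k>i$ and $x(\gamma(i))\ge x(\gamma(k))$ for $k<i$; a bridge is irreducible if it has none; $\mathrm{iB}$ is the set of irreducible bridges, and $\mathbb{P}_{\mathrm{iB}}(\gamma)=\sigma(\gamma)e^{-\lambda_0|\gamma|}$ is a probability measure on $\mathrm{iB}$. Concatenation: for walks $\gamma_1$ of length $n$ and $\gamma_2$ of length $m$, $\gamma_1\circ\gamma_2(i)=\gamma_1(i)$ for $i\le n$ and $\gamma_1(n)+\gamma_2(i-n)$ for $n\le i\le n+m$. $\mathbb{P}_{\mathrm{iB}}^{\otimes\mathbb{N}}$ is the law of the semi-infinite walk $\gamma=\gamma_1\circ\gamma_2\circ\cdots$ where $\gamma_1,\gamma_2,\dots$ are i.i.d. with law $\mathbb{P}_{\mathrm{iB}}$; its renewal times are $r_k=|\gamma_1|+\dots+|\gamma_k|$ for $k\ge1$, and $R_\gamma=\{r_k:k\ge1\}$. *)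

(* Defs.v *)
From HB Require Import structures.
From mathcomp Require Import all_boot all_order all_algebra perm.
From mathcomp Require Import all_classical all_reals all_analysis.
Set Implicit Arguments. Unset Strict Implicit. Unset Printing Implicit Defensive.
Import Order.TTheory GRing.Theory Num.Theory.
Local Open Scope ring_scope.
Local Open Scope classical_set_scope.

(* Points of Z^(d+1) (dimension d.+1 >= 1, so that the first coordinate exists). *)
Definition pt (d : nat) := 'rV[int]_d.+1.

Definition xcoord {d : nat} (v : pt d) : int := v ord0 ord0.

(* Symmetries of Z^(d+1): signed coordinate permutations (hyperoctahedral group). *)
Definition sym_apply {d : nat} (s : {perm 'I_(d.+1)}) (e : 'I_(d.+1) -> bool) (v : pt d) : pt d :=
  \row_i ((-1) ^+ e i * v ord0 (s i)).

(* A (finite) walk is represented by the list [:: g(0); g(1); ...; g(n)]. *)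
Definition wlen {d : nat} (g : seq (pt d)) : nat := (size g).-1.
Definition wpos {d : nat} (g : seq (pt d)) (i : nat) : pt d := nth 0 g i.

Definition is_walk {d : nat} (Omega : seq (pt d)) (n : nat) (g : seq (pt d)) : bool :=
  [&& size g == n.+1, wpos g 0 == 0 &
      all (fun i => wpos g i.+1 - wpos g i \in Omega) (iota 0 n)].

Fixpoint incr_seqs {d : nat} (Omega : seq (pt d)) (n : nat) : seq (seq (pt d)) :=
  match n with
  | 0 => [:: [::]]
  | n'.+1 => [seq v :: s | v <- undup Omega, s <- incr_seqs Omega n']
  end.
Definition walk_of {d : nat} (s : seq (pt d)) : seq (pt d) := 0 :: scanl +%R 0 s.
Definition Wn {d : nat} (Omega : seq (pt d)) (n : nat) : seq (seq (pt d)) :=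
  map walk_of (incr_seqs Omega n).

Definition ltime {d : nat} (g : seq (pt d)) (v : pt d) : nat := count_mem v g.

Section Weights.
Context {R : realType} {d : nat}.
Variables (phi : nat -> R) (rho : pt d -> R).

(* sigma(g) = prod_v e^{-phi(l_v)} prod_i rho(g(i)-g(i-1));
   unvisited v have l_v = 0 and contribute e^{-phi 0} *)
Definition sigma (g : seq (pt d)) : R :=
  (\prod_(v <- undup g) expR (- phi (ltime g v))) *
  \prod_(i < wlen g) rho (wpos g i.+1 - wpos g i).

Definition Zn (Omega : seq (pt d)) (n : nat) : R := \sum_(g <- Wn Omega n) sigma g.

Definition lambda0 (Omega : seq (pt d)) : R :=
  limn (fun n : nat => (ln (Zn Omega n.+1) / n.+1%:R : R^o)).
End Weights.

Definition is_bridge {d : nat} (Omega : seq (pt d)) (n : nat) (g : seq (pt d)) : bool :=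
  is_walk Omega n g &&
  all (fun i => (xcoord (wpos g 0) < xcoord (wpos g i)) &&
                (xcoord (wpos g i) <= xcoord (wpos g n))) (iota 1 n).

Definition is_renewal {d : nat} (n : nat) (g : seq (pt d)) (i : nat) : bool :=
  [&& (0 < i)%N, (i < n)%N,
      all (fun k => xcoord (wpos g i) < xcoord (wpos g k)) (iota i.+1 (n - i)) &
      all (fun k => xcoord (wpos g k) <= xcoord (wpos g i)) (iota 0 i)].

Definition is_irr_bridge {d : nat} (Omega : seq (pt d)) (g : seq (pt d)) : bool :=
  [&& (0 < wlen g)%N, is_bridge Omega (wlen g) g &
      ~~ has (is_renewal (wlen g) g) (iota 1 (wlen g))].

Definition PBn {R : realType} {d : nat} (phi : nat -> R) (rho : pt d -> R)
  (Omega : seq (pt d)) (n : nat) (A : pred (seq (pt d))) : R :=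
  (\sum_(g <- Wn Omega n | is_bridge Omega n g && A g) sigma phi rho g) /
  (\sum_(g <- Wn Omega n | is_bridge Omega n g) sigma phi rho g).

Definition PiB {R : realType} {d : nat} (phi : nat -> R) (rho : pt d -> R)
  (Omega : seq (pt d)) (g : seq (pt d)) : R :=
  if is_irr_bridge Omega g
  then sigma phi rho g * expR (- lambda0 phi rho Omega * (wlen g)%:R) else 0.

Definition cat_walk {d : nat} (g1 g2 : seq (pt d)) : seq (pt d) :=
  g1 ++ map (fun v => last 0 g1 + v) (behead g2).

Definition prefix_walk {d : nat} (w : nat -> seq (pt d)) (k : nat) : seq (pt d) :=
  foldl cat_walk [:: 0] (mkseq w k).
Definition inf_walk {d : nat} (w : nat -> seq (pt d)) (i : nat) : pt d :=
  nth 0 (prefix_walk w i) i.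

Definition renewal_set {d : nat} (w : nat -> seq (pt d)) : set nat :=
  [set m | exists k : nat, (0 < k)%N /\ m = (\sum_(j < k) wlen (w j))%N].

Definition condprob {dT : measure_display} {T : measurableType dT} {R : realType}
  (P : probability T R) (F E : set T) : R :=
  fine (P (F `&` E)) / fine (P E).

(* Main.v *)
Require Import Defs.
From HB Require Import structures.
From mathcomp Require Import all_boot all_order all_algebra perm.
From mathcomp Require Import all_classical all_reals all_analysis.
From mathcomp Require Import lra zify.
Import Order.TTheory GRing.Theory Num.Theory.
Local Open Scope ring_scope.
Local Open Scope classical_set_scope.


Section Walks.
Context {d : nat} (Omega : seq (pt d)).

Lemma xcoordD (u v : pt d) : xcoord (u + v) = xcoord u + xcoord v.
Proof. by rewrite /xcoord mxE. Qed.
Lemma xcoordB (u v : pt d) : xcoord (u - v) = xcoord u - xcoord v.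
Proof. by rewrite /xcoord !mxE. Qed.
Lemma xcoord0 : xcoord (0 : pt d) = 0.
Proof. by rewrite /xcoord mxE. Qed.

Lemma bridgeP n (g : seq (pt d)) : is_bridge Omega n g <->
  [/\ size g = n.+1, wpos g 0 = 0,
      (forall i, (i < n)%N -> wpos g i.+1 - wpos g i \in Omega) &
      (forall i, (0 < i <= n)%N -> 0 < xcoord (wpos g i) <= xcoord (wpos g n))].
Proof.
rewrite /is_bridge /is_walk; split.
- case/andP=> /and3P[/eqP Hs /eqP H0 /allP Hi] /allP Hx; split => //.
  + by move=> i Hin; apply: Hi; rewrite mem_iota.
  + move=> i Hin; have := Hx i; rewrite mem_iota add1n ltnS H0 xcoord0.
    by move=> /(_ Hin).
- case=> Hs H0 Hi Hx; apply/andP; split.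
  + apply/and3P; split; [by rewrite Hs| by rewrite H0|].
    by apply/allP=> i; rewrite mem_iota add0n => /andP[_]; apply: Hi.
  + apply/allP=> i; rewrite mem_iota add1n ltnS H0 xcoord0; exact: Hx.
Qed.

Lemma renewalP n (g : seq (pt d)) i : is_renewal n g i <->
  [/\ (0 < i)%N, (i < n)%N,
      (forall k, (i < k <= n)%N -> xcoord (wpos g i) < xcoord (wpos g k)) &
      (forall k, (k < i)%N -> xcoord (wpos g k) <= xcoord (wpos g i))].
Proof.
rewrite /is_renewal; split.
- case/and4P=> H1 H2 /allP H3 /allP H4; split => //.
  + move=> k Hk; apply: H3; rewrite mem_iota addSn subnKC; last exact: ltnW.
    by rewrite ltnS.
  + by move=> k Hk; apply: H4; rewrite mem_iota.
- case=> H1 H2 H3 H4; apply/and4P; split => //.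
  + apply/allP=> k; rewrite mem_iota addSn subnKC ?ltnS; last exact: ltnW.
    exact: H3.
  + by apply/allP=> k; rewrite mem_iota => /andP[_]; apply: H4.
Qed.

Lemma size_cat_walk (g1 g2 : seq (pt d)) : size (cat_walk g1 g2) = (size g1 + (size g2).-1)%N.
Proof. by rewrite /cat_walk size_cat size_map size_behead. Qed.

Lemma nth_cat_walk_l (g1 g2 : seq (pt d)) i : (i < size g1)%N ->
  nth 0 (cat_walk g1 g2) i = nth 0 g1 i.
Proof. by move=> H; rewrite /cat_walk nth_cat H. Qed.

Lemma nth_cat_walk_r (g1 g2 : seq (pt d)) a j : size g1 = a.+1 -> nth 0 g2 0 = 0 ->
  (j < size g2)%N -> nth 0 (cat_walk g1 g2) (a + j) = last 0 g1 + nth 0 g2 j.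
Proof.
move=> H1 H2 Hj; rewrite /cat_walk nth_cat H1.
case: j Hj => [|j] Hj.
  by rewrite addn0 ltnSn -nth_last H1 /= H2 addr0.
rewrite ltnNge addnS ltnS leq_addr /= subSS addKn (nth_map 0).
  by rewrite nth_behead.
by rewrite size_behead -ltnS (ltn_predK Hj).
Qed.


Lemma addKB (c y z : pt d) : (c + y) - (c + z) = y - z.
Proof. by rewrite opprD addrACA subrr add0r. Qed.

Lemma addKB' (c y z : pt d) : (y - c) - (z - c) = y - z.
Proof. by rewrite opprB addrA subrK. Qed.

Lemma cat_pos {H w : seq (pt d)} {a b} : is_bridge Omega a H -> is_bridge Omega b w ->
  [/\ forall i, (i <= a)%N -> wpos (cat_walk H w) i = wpos H i,
      forall j, (j <= b)%N -> wpos (cat_walk H w) (a + j) = wpos H a + wpos w j,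
      forall i, (i <= a)%N -> xcoord (wpos H i) <= xcoord (wpos H a) &
      forall j, (j <= b)%N -> 0 <= xcoord (wpos w j) <= xcoord (wpos w b)].
Proof.
move=> /bridgeP[Hs H0 Hi Hx] /bridgeP[ws w0 wi wx]; split.
- by move=> i Hia; rewrite /wpos nth_cat_walk_l // Hs.
- move=> j Hj; by rewrite /wpos (@nth_cat_walk_r H w a j Hs w0) ?ws // -nth_last Hs.
- move=> [|i] Hia.
    rewrite H0 xcoord0; case: a Hia Hs Hi Hx => [|a] _ _ _ Hx; first by rewrite H0 xcoord0.
    by case/andP: (Hx a.+1 (leqnn _)) => /ltW.
  by case/andP: (Hx i.+1 Hia).
- move=> [|j] Hj; first by rewrite w0 xcoord0 lexx /=; case: b Hj ws wi wx => [|b] _ _ _ wx;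
    [rewrite w0 xcoord0| case/andP: (wx b.+1 (leqnn _)) => /ltW].
  by case/andP: (wx j.+1 Hj) => /ltW ->.
Qed.

Lemma cat_bridge a b (H w : seq (pt d)) :
  is_bridge Omega a H -> is_bridge Omega b w -> is_bridge Omega (a + b) (cat_walk H w).
Proof.
move=> HH Hw; have [PL PR XH Xw] := cat_pos HH Hw.
move: HH Hw => /bridgeP[Hs H0 Hi Hx] /bridgeP[ws w0 wi wx].
apply/bridgeP; split.
- by rewrite size_cat_walk Hs ws.
- by rewrite PL.
- move=> i Hi'; case: (ltnP i a) => Hia.
    by rewrite !PL //; [apply: Hi | exact: ltnW].
  rewrite -(subnKC Hia) -addnS !PR; [|lia|lia].
  by rewrite addKB; apply: wi; lia.
- move=> i /andP[Hi0 Hib]; rewrite PR // xcoordD.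
  have /andP[Xb0 _] := Xw b (leqnn b).
  case: (leqP i a) => Hia.
    rewrite PL //; have := XH i Hia.
    have /andP[? ?] : 0 < xcoord (wpos H i) <= xcoord (wpos H a) by apply: Hx; rewrite Hi0.
    move=> ?; apply/andP; split; lra.
  rewrite -(subnKC (ltnW Hia)) PR; last lia.
  rewrite xcoordD; have := XH 0%N (leq0n _); rewrite H0 xcoord0 => ?.
  have /andP[? ?] : 0 < xcoord (wpos w (i - a)) <= xcoord (wpos w b) by apply: wx; lia.
  apply/andP; split; lra.
Qed.

Lemma cat_renewal_a a b (H w : seq (pt d)) : (0 < a)%N -> (0 < b)%N ->
  is_bridge Omega a H -> is_bridge Omega b w -> is_renewal (a + b) (cat_walk H w) a.
Proof.
move=> a0 b0 HH Hw; have [PL PR XH Xw] := cat_pos HH Hw.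
move: HH Hw => /bridgeP[Hs H0 Hi Hx] /bridgeP[ws w0 wi wx].
apply/renewalP; split => //; first lia.
- move=> k Hk; rewrite PL // -(subnKC (ltnW (proj1 (andP Hk)))) PR; last lia.
  rewrite xcoordD.
  have /andP[? ?] : 0 < xcoord (wpos w (k - a)) <= xcoord (wpos w b) by apply: wx; lia.
  lra.
- by move=> k Hk; rewrite !PL //; [apply: XH; lia| lia].
Qed.

Lemma cat_renewal_r a b (H w : seq (pt d)) i : (a < i)%N ->
  is_bridge Omega a H -> is_bridge Omega b w -> is_renewal (a + b) (cat_walk H w) i ->
  is_renewal b w (i - a).
Proof.
move=> ai HH Hw; have [PL PR XH Xw] := cat_pos HH Hw.
move=> /renewalP[i0 ib Hr1 Hr2].
have Hi : i = (a + (i - a))%N by lia.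
have E1 : wpos (cat_walk H w) i = wpos H a + wpos w (i - a).
  by rewrite {1}Hi PR //; lia.
apply/renewalP; split; [lia|lia| |].
- move=> k Hk; have := Hr1 (a + k)%N ltac:(lia).
  by rewrite E1 PR ?ltr_leD ?xcoordD ?ltrD2l //; lia.
- move=> k Hk; have := Hr2 (a + k)%N ltac:(lia).
  by rewrite E1 PR ?xcoordD ?lerD2l //; lia.
Qed.


Lemma split_bridge n (g : seq (pt d)) i : is_bridge Omega n g -> is_renewal n g i ->
  [/\ is_bridge Omega i (take i.+1 g),
      is_bridge Omega (n - i) [seq v - wpos g i | v <- drop i g],
      cat_walk (take i.+1 g) [seq v - wpos g i | v <- drop i g] = g &
      forall j, is_renewal (n - i) [seq v - wpos g i | v <- drop i g] j ->
        is_renewal n g (i + j)].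
Proof.
move=> Hg Hr; move: (Hg) (Hr) => /bridgeP[gs g0 gi gx] /renewalP[i0 iN r1 r2].
set H := take i.+1 g; set w := [seq v - wpos g i | v <- drop i g].
have PH : forall k, (k <= i)%N -> wpos H k = wpos g k.
  by move=> k Hk; rewrite /wpos nth_take.
have Pw : forall j, (j <= n - i)%N -> wpos w j = wpos g (i + j) - wpos g i.
  move=> j Hj; rewrite /wpos (nth_map 0) ?nth_drop //.
  rewrite size_drop gs; lia.
have wx0 : forall j, (j <= n - i)%N -> 0 <= xcoord (wpos w j).
  move=> [|j] Hj; first by rewrite Pw // addn0 subrr xcoord0.
  rewrite Pw // xcoordB subr_ge0; apply/ltW/r1; lia.
split.
- apply/bridgeP; split.
  + rewrite size_take gs; case: ifP => //; lia.
  + by rewrite PH.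
  + move=> k Hk; rewrite (PH k.+1 Hk) (PH k (ltnW Hk)); apply: gi; lia.
  + move=> k Hk; have Hki : (k <= i)%N by case/andP: Hk.
    rewrite (PH k Hki) (PH i (leqnn i)).
    have /andP[? _] : 0 < xcoord (wpos g k) <= xcoord (wpos g n).
      apply: gx; lia.
    apply/andP; split => //.
    case: (ltnP k i) => Hki'; first exact: r2.
    by have -> : k = i by lia.
- apply/bridgeP; split.
  + rewrite size_map size_drop gs; lia.
  + by rewrite Pw // addn0 subrr.
  + move=> k Hk; rewrite (Pw k.+1 Hk) (Pw k (ltnW Hk)) addKB' addnS; apply: gi; lia.
  + move=> k Hk; have Hk' : (k <= n - i)%N by case/andP: Hk.
    rewrite (Pw k Hk') (Pw (n - i)%N (leqnn _)) !xcoordB.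
    have /andP[_ ?] : 0 < xcoord (wpos g (i + k)) <= xcoord (wpos g n).
      apply: gx; lia.
    have ? : xcoord (wpos g i) < xcoord (wpos g (i + k)).
      apply: r1; lia.
    have -> : (i + (n - i))%N = n by lia.
    by rewrite subr_gt0 lerD2r; apply/andP; split.
- rewrite /cat_walk /w behead_map -drop1 drop_drop -map_comp.
  have -> : last 0 H = wpos g i.
    rewrite -nth_last /H size_takel; last by rewrite gs; lia.
    by rewrite nth_take.
  by rewrite (eq_map (g := id)) ?map_id ?cat_take_drop // => v /=; rewrite subrKC.
- move=> j /renewalP[j0 jN s1 s2]; apply/renewalP; split; [lia|lia| |].
  + move=> k Hk; have Hk' : (j < k - i <= n - i)%N by lia.
    have := s1 (k - i)%N Hk'.
    have Hj : (j <= n - i)%N by lia.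
    have Hki : k = (i + (k - i))%N by lia.
    rewrite (Pw j Hj) (Pw (k - i)%N (proj2 (andP Hk'))) !xcoordB -Hki.
    by rewrite ltrD2r.
  + move=> k Hk; have Hj : (j <= n - i)%N by lia.
    case: (ltnP k i) => Hki.
      have := r2 k Hki; have := wx0 j Hj; rewrite (Pw j Hj).
      rewrite xcoordB subr_ge0 => h1 h2; exact: le_trans h2 h1.
    have Hk' : (k - i < j)%N by lia.
    have := s2 (k - i)%N Hk'.
    have Hki' : k = (i + (k - i))%N by lia.
    rewrite (Pw j Hj) (Pw (k - i)%N ltac:(lia)) !xcoordB -Hki'.
    by rewrite lerD2r.
Qed.

End Walks.
Arguments bridgeP {d Omega n g}.
Arguments renewalP {d n g i}.
Arguments cat_pos {d Omega H w a b}.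
Arguments cat_bridge {d Omega a b H w}.
Arguments cat_renewal_a {d Omega a b H w}.
Arguments cat_renewal_r {d Omega a b H w i}.
Arguments split_bridge {d Omega n g i}.


Section Concat.
Context {d : nat} (Omega : seq (pt d)).

Definition concatw (ws : seq (seq (pt d))) : seq (pt d) := foldl cat_walk [:: 0] ws.
Definition lens (ws : seq (seq (pt d))) : nat := sumn (map wlen ws).

Lemma irrP {g : seq (pt d)} : is_irr_bridge Omega g ->
  [/\ (0 < wlen g)%N, is_bridge Omega (wlen g) g &
      forall i, (0 < i < wlen g)%N -> ~~ is_renewal (wlen g) g i].
Proof.
case/and3P=> H1 H2 /hasPn H3; split => // i Hi; apply: H3.
by rewrite mem_iota; lia.
Qed.

Lemma concat_rcons ws w : concatw (rcons ws w) = cat_walk (concatw ws) w.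
Proof. by rewrite /concatw foldl_rcons. Qed.

Lemma size_concat ws : size (concatw ws) = (lens ws).+1.
Proof.
elim/last_ind: ws => [//|ws w IH].
by rewrite concat_rcons size_cat_walk IH /lens map_rcons sumn_rcons.
Qed.

Lemma bridge0 : is_bridge Omega 0 [:: 0].
Proof. by apply/bridgeP; split => // i; lia. Qed.

Lemma bridge_concat {ws} : all (is_irr_bridge Omega) ws ->
  is_bridge Omega (lens ws) (concatw ws).
Proof.
elim/last_ind: ws => [_|ws w IH]; first exact: bridge0.
rewrite all_rcons => /andP[/irrP[_ Hw _] /IH Hws].
by rewrite concat_rcons /lens map_rcons sumn_rcons; apply: cat_bridge.
Qed.

Lemma bridge_head {n} {g : seq (pt d)} : is_bridge Omega n g -> g = 0 :: behead g.
Proof. by case/bridgeP; case: g => [|x g] //= _ <-. Qed.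

Lemma wlen_bridge {n} {g : seq (pt d)} : is_bridge Omega n g -> wlen g = n.
Proof. by case/bridgeP=> Hs _ _ _; rewrite /wlen Hs. Qed.

Lemma concat_len_le {vs w vs' w'} :
  all (is_irr_bridge Omega) vs -> is_irr_bridge Omega w ->
  all (is_irr_bridge Omega) vs' -> is_irr_bridge Omega w' ->
  cat_walk (concatw vs) w = cat_walk (concatw vs') w' -> (lens vs' <= lens vs)%N.
Proof.
move=> Hvs /irrP[b0 Hw Hwn] Hvs' /irrP[b0' Hw' Hwn'] E.
rewrite leqNgt; apply/negP => Hlt.
have HB := bridge_concat Hvs; have HB' := bridge_concat Hvs'.
have Es : (lens vs + wlen w = lens vs' + wlen w')%N.
  by have := congr1 size E; rewrite !size_cat_walk !size_concat /wlen; lia.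
have R1' : (0 < lens vs')%N by lia.
have R2 := cat_renewal_a R1' b0' HB' Hw'.
rewrite -E -Es in R2.
have := cat_renewal_r Hlt HB Hw R2.
by move/negP: (Hwn (lens vs' - lens vs)%N ltac:(lia)).
Qed.

Lemma concat_uniq ws ws' : all (is_irr_bridge Omega) ws ->
  all (is_irr_bridge Omega) ws' -> concatw ws = concatw ws' -> ws = ws'.
Proof.
elim/last_ind: ws ws' => [|vs w IH] ws'.
  case/lastP: ws' => [//|vs' w'] _; rewrite all_rcons => /andP[/irrP[b0 _ _] _] E.
  by have := congr1 size E; rewrite !size_concat /lens map_rcons sumn_rcons /=; lia.
case/lastP: ws' => [|vs' w'].
  rewrite all_rcons => /andP[/irrP[b0 _ _] _] _ E.
  by have := congr1 size E; rewrite !size_concat /lens map_rcons sumn_rcons /=; lia.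
rewrite !all_rcons => /andP[Hw Hvs] /andP[Hw' Hvs'].
rewrite !concat_rcons => E.
have Ea : lens vs = lens vs'.
  by apply/eqP; rewrite eqn_leq (concat_len_le Hvs Hw Hvs' Hw' E)
       (concat_len_le Hvs' Hw' Hvs Hw (esym E)).
have Ec : concatw vs = concatw vs'.
  have := congr1 (take (lens vs).+1) E.
  by rewrite /cat_walk !take_size_cat // !size_concat Ea.
rewrite (IH vs' Hvs Hvs' Ec); congr rcons.
have := congr1 (drop (lens vs).+1) E.
rewrite /cat_walk !drop_size_cat ?size_concat ?Ea // Ec => /inj_map E2.
have {}E2 : behead w = behead w' by apply: E2 => x y; apply: addrI.
case/irrP: Hw => _ /bridge_head -> _; case/irrP: Hw' => _ /bridge_head -> _.
by rewrite E2.
Qed.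

Lemma decomp_exists n (g : seq (pt d)) : (0 < n)%N -> is_bridge Omega n g ->
  exists ws, all (is_irr_bridge Omega) ws && (concatw ws == g).
Proof.
have [m Hm] : exists m, (n < m)%N by exists n.+1.
elim: m n Hm g => [|m IH] n Hnm g n0 Hg; first by [].
have {}Hnm : (n <= m)%N by [].
case Hh: (has (is_renewal n g) (iota 1 n)); last first.
  exists [:: g]; rewrite /= andbT /concatw /= /cat_walk /=.
  have Hgw := wlen_bridge Hg.
  apply/andP; split.
    by rewrite /is_irr_bridge Hgw n0 Hg Hh.
  apply/eqP; rewrite {2}(bridge_head Hg); congr cons; apply: map_id_in => v _; exact: add0r.
have exP : exists i, is_renewal n g i.
  by case/hasP: Hh => i _ Hi; exists i.
have ubP : forall i, is_renewal n g i -> (i <= n)%N.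
  by move=> i /renewalP[_ ? _ _]; lia.
case: (ex_maxnP exP ubP) => i Hi Hmax.
have [HH Hw Ecat Hlift] := split_bridge Hg Hi.
case/renewalP: (Hi) => i0 iN _ _.
have [ws /andP[Hws /eqP Ews]] := IH i ltac:(lia) _ i0 HH.
exists (rcons ws [seq v - wpos g i | v <- drop i g]).
rewrite all_rcons Hws concat_rcons Ews Ecat eqxx !andbT.
rewrite /is_irr_bridge (wlen_bridge Hw) Hw /=; apply/andP; split; first by rewrite subn_gt0.
apply/hasPn => j; rewrite mem_iota => Hj; apply/negP => /Hlift /Hmax; lia.
Qed.

End Concat.
Arguments irrP {d Omega g}.
Arguments bridge_concat {d Omega ws}.
Arguments bridge_head {d Omega n g}.
Arguments wlen_bridge {d Omega n g}.
Arguments concat_len_le {d Omega vs w vs' w'}.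
Arguments concat_uniq {d Omega ws ws'}.
Arguments decomp_exists {d Omega n g}.


Section Sigma.
Context {R : realType} {d : nat} (Omega : seq (pt d)) (phi : nat -> R) (rho : pt d -> R).
Hypothesis Hphi1 : phi 1%N = 0.

Definition siteS (g : seq (pt d)) : R := \prod_(v <- undup g) expR (- phi (ltime g v)).
Definition rhoS (g : seq (pt d)) : R := \prod_(i < wlen g) rho (wpos g i.+1 - wpos g i).

Lemma sigmaE g : sigma phi rho g = siteS g * rhoS g.
Proof. by []. Qed.

Lemma rho_cat {a b} {H w : seq (pt d)} : is_bridge Omega a H -> is_bridge Omega b w ->
  rhoS (cat_walk H w) = rhoS H * rhoS w.
Proof.
move=> HH Hw; have [PL PR _ _] := cat_pos HH Hw.
rewrite /rhoS (wlen_bridge (cat_bridge HH Hw)) (wlen_bridge HH) (wlen_bridge Hw).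
rewrite big_split_ord; congr (_ * _); apply: eq_bigr => i _.
  by rewrite (PL i.+1 (ltn_ord i)) (PL i (ltnW (ltn_ord i))).
by rewrite -addnS (PR i.+1 (ltn_ord i)) (PR i (ltnW (ltn_ord i))) addKB.
Qed.

Lemma site_cat {a} {H w : seq (pt d)} : is_bridge Omega a H -> is_irr_bridge Omega w ->
  siteS (cat_walk H w) = siteS H * siteS w.
Proof.
move=> HH /irrP[b0 Hw _].
have [PL PR XH Xw] := cat_pos HH Hw.
move: (HH) (Hw) => /bridgeP[Hs H0 _ _] /bridgeP[ws w0 _ wx].
set b := wlen w in b0 Hw PR Xw ws wx.
have Hc : last 0 H = wpos H a by rewrite -nth_last Hs.
set s := behead w.
have Ew : w = 0 :: s := bridge_head Hw.
have xH : forall v, v \in H -> xcoord v <= xcoord (wpos H a).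
  move=> v /(nthP 0)[k Hk <-]; apply: XH; rewrite -ltnS -Hs //.
have c0 : 0 <= xcoord (wpos H a) by have := XH 0%N (leq0n _); rewrite H0 xcoord0.
have xs : forall u, u \in s -> 0 < xcoord u.
  move=> u /(nthP 0)[j Hj <-]; rewrite nth_behead.
  have : (0 < j.+1 <= b)%N by move: Hj; rewrite size_behead ws /=.
  by move/wx => /andP[].
set T := [seq last 0 H + v | v <- s].
have disj : forall v, v \in H -> v \notin T.
  move=> v vH; apply/negP => /mapP[u us Ev].
  have := xH v vH; rewrite Ev xcoordD Hc gerDl leNgt; by rewrite xs.
have s0n : (0 : pt d) \notin s by apply/negP => /xs; rewrite xcoord0 ltxx.
rewrite /siteS /cat_walk -/s -/T undup_cat.
have -> : [seq x <- undup H | x \notin T] = undup H.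
  by apply/all_filterP/allP => v; rewrite mem_undup; apply: disj.
rewrite big_cat /=; congr (_ * _).
  apply: eq_big_seq => v; rewrite mem_undup => vH.
  by rewrite /ltime count_cat (count_memPn (disj v vH)) addn0.
rewrite /T undup_map_inj; last exact: addrI.
rewrite big_map Ew /= (negbTE s0n) big_cons /ltime /= eqxx.
rewrite (count_memPn s0n) Hphi1 oppr0 expR0 mul1r.
apply: eq_big_seq => u; rewrite mem_undup => us.
have uT : last 0 H + u \in T by apply: map_f.
have nH : last 0 H + u \notin H by apply/negP => /disj; rewrite uT.
rewrite count_cat (count_memPn nH) add0n count_map.
have -> : (0 == u) = false by apply/negP => /eqP E; rewrite E us in s0n.
rewrite add0n; congr (expR (- phi _)); apply: eq_count => x /=.
by rewrite inj_eq //; apply: addrI.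
Qed.

Lemma sigma_cat {a} {H w : seq (pt d)} : is_bridge Omega a H -> is_irr_bridge Omega w ->
  sigma phi rho (cat_walk H w) = sigma phi rho H * sigma phi rho w.
Proof.
move=> HH Hw; have [_ Hw' _] := irrP Hw.
by rewrite !sigmaE (site_cat HH Hw) (rho_cat HH Hw') mulrACA.
Qed.

Lemma sigma0 : sigma phi rho [:: 0] = 1.
Proof.
by rewrite sigmaE /siteS /rhoS /= big_seq1 big_ord0 /ltime /= eqxx Hphi1 oppr0 expR0 mulr1.
Qed.

Lemma sigma_concat ws : all (is_irr_bridge Omega) ws ->
  sigma phi rho (concatw ws) = \prod_(w <- ws) sigma phi rho w.
Proof.
elim/last_ind: ws => [_|ws w IH]; first by rewrite big_nil sigma0.
rewrite all_rcons => /andP[Hw Hws].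
rewrite concat_rcons (sigma_cat (bridge_concat Hws) Hw) IH //.
by rewrite -cats1 big_cat big_seq1.
Qed.

End Sigma.


Section WnSec.
Context {d : nat} (Omega : seq (pt d)).

Lemma mem_incr_seqs n (s : seq (pt d)) :
  (s \in incr_seqs Omega n) = (size s == n) && all (fun v => v \in Omega) s.
Proof.
elim: n s => [|n IH] [|v s] /=.
- by rewrite inE.
- by rewrite inE.
- by apply/allpairsPdep; case=> x [y [_ _ E]].
- apply/allpairsPdep/idP.
    case=> x [y [Hx Hy [-> ->]]]; move: Hx; rewrite mem_undup => ->.
    by move: Hy; rewrite IH.
  case/andP=> Hs /andP[Hv Ha]; exists v, s; split => //.
    by rewrite mem_undup.
  by rewrite IH -eqSS Hs Ha.
Qed.

Lemma uniq_incr_seqs n : uniq (incr_seqs Omega n).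
Proof.
elim: n => [//|n IH] /=.
apply: allpairs_uniq => //; first exact: undup_uniq.
by move=> [x y] [x' y'] _ _ /= [-> ->].
Qed.

Lemma walk_of_inj : injective (@walk_of d).
Proof.
move=> s t [] /(can_inj (scanlK (f := fun x y : pt d => y - x) (g := +%R) _ 0)).
by apply => x y /=; rewrite addrC addKr.
Qed.

Lemma Wn_uniq n : uniq (Wn Omega n).
Proof. by rewrite map_inj_uniq ?uniq_incr_seqs //; exact: walk_of_inj. Qed.

Lemma bridge_in_Wn n (g : seq (pt d)) : is_bridge Omega n g -> g \in Wn Omega n.
Proof.
move=> Hg; have Eg := bridge_head Hg.
move: Hg => /bridgeP[gs _ gi _].
set s := behead g in Eg.
set p := pairmap (fun x y : pt d => y - x) 0 s.
have -> : g = walk_of p.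
  rewrite Eg /walk_of /p pairmapK // => x y /=; exact: subrKC.
apply: map_f; rewrite mem_incr_seqs size_pairmap /s size_behead gs eqxx /=.
apply/allP => u /(nthP 0)[i Hi <-].
rewrite size_pairmap in Hi; rewrite (nth_pairmap 0) //.
have Hin : (i < n)%N by move: Hi; rewrite /s size_behead gs.
have := gi i Hin; rewrite /wpos Eg /=.
by case: i Hi Hin.
Qed.

End WnSec.


Section Prefix.
Context {d : nat}.
Implicit Types (w : nat -> seq (pt d)).

Lemma prefix_walkE w k : prefix_walk w k = concatw (mkseq w k).
Proof. by []. Qed.

Lemma prefix_walk_S w k : prefix_walk w k.+1 = cat_walk (prefix_walk w k) (w k).
Proof. by rewrite !prefix_walkE mkseqS concat_rcons. Qed.

Lemma prefix_walk_ext w i j : (i <= j)%N ->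
  exists s, prefix_walk w j = prefix_walk w i ++ s.
Proof.
elim: j => [|j IH]; first by rewrite leqn0 => /eqP ->; exists [::]; rewrite cats0.
rewrite leq_eqVlt => /orP[/eqP ->|]; first by exists [::]; rewrite cats0.
rewrite ltnS => /IH[s Hs]; rewrite prefix_walk_S /cat_walk Hs -catA.
by eexists.
Qed.

Lemma sum_wlen_mkseq w k : lens (mkseq w k) = (\sum_(j < k) wlen (w j))%N.
Proof.
rewrite /lens sumnE /mkseq !big_map.
have -> : iota 0 k = index_iota 0 k by rewrite /index_iota subn0.
by rewrite big_mkord.
Qed.

Lemma size_prefix w k : size (prefix_walk w k) = (\sum_(j < k) wlen (w j)).+1%N.
Proof. by rewrite prefix_walkE size_concat sum_wlen_mkseq. Qed.

Lemma sum_ge_card (f : nat -> nat) k : (forall j, (j < k)%N -> (0 < f j)%N) ->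
  (k <= \sum_(j < k) f j)%N.
Proof.
move=> Hf; rewrite -[X in (X <= _)%N]card_ord -sum1_card.
by apply: leq_sum => j _; apply: Hf.
Qed.

Lemma sum_mono (f : nat -> nat) n k : (n <= k)%N ->
  (\sum_(j < n) f j <= \sum_(j < k) f j)%N.
Proof.
elim: k => [|k IH]; first by rewrite leqn0 => /eqP ->.
rewrite leq_eqVlt => /orP[/eqP ->//|]; rewrite ltnS => /IH H.
by rewrite big_ord_recr /=; apply: leq_trans H _; apply: leq_addr.
Qed.

Lemma inf_walk_eq w k i : (forall j, (j < k)%N -> (0 < wlen (w j))%N) ->
  (i <= \sum_(j < k) wlen (w j))%N -> inf_walk w i = nth 0 (prefix_walk w k) i.
Proof.
move=> Hpos Hi; rewrite /inf_walk.
case: (leqP i k) => Hik.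
  have [s ->] := prefix_walk_ext w _ _ Hik; rewrite nth_cat size_prefix ltnS.
  have -> : (i <= \sum_(j < i) wlen (w j))%N.
    apply: (@sum_ge_card (fun j => wlen (w j)) i) => j Hj; apply: Hpos; exact: leq_trans Hj Hik.
  by [].
have [s ->] := prefix_walk_ext w _ _ (ltnW Hik).
by rewrite nth_cat size_prefix ltnS Hi.
Qed.

Lemma mkseq_inf w k : (forall j, (j < k)%N -> (0 < wlen (w j))%N) ->
  mkseq (inf_walk w) (\sum_(j < k) wlen (w j)).+1 = prefix_walk w k.
Proof.
move=> Hpos; apply: (@eq_from_nth _ 0); first by rewrite size_mkseq size_prefix.
move=> i; rewrite size_mkseq => Hi; rewrite nth_mkseq //.
by apply: inf_walk_eq.
Qed.

Lemma inf_walk_ext w w' n i : (forall j, (j < n)%N -> w j = w' j) -> (i <= n)%N ->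
  inf_walk w i = inf_walk w' i.
Proof.
move=> H Hi; rewrite /inf_walk /prefix_walk.
suff -> : mkseq w i = mkseq w' i by [].
rewrite /mkseq.
apply/eq_in_map => j; rewrite mem_iota add0n => /andP[_ Hj].
by apply: H; exact: leq_trans Hj Hi.
Qed.

Lemma mkseq_ext (w : nat -> seq (pt d)) (ws : seq (seq (pt d))) k :
  size ws = k -> (forall j, (j < k)%N -> w j = nth [::] ws j) -> mkseq w k = ws.
Proof.
move=> Hs H; rewrite -(mkseq_nth [::] ws) Hs /mkseq.
apply/eq_in_map => j; rewrite mem_iota add0n => /andP[_ Hj]; exact: H.
Qed.

End Prefix.


Section Meas.
Context {R : realType} {d : nat} (Omega : seq (pt d)) (phi : nat -> R) (rho : pt d -> R)
  {dT : measure_display} {T : measurableType dT} (P : probability T R)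
  (X : nat -> T -> seq (pt d)).
Hypothesis HXlaw : forall (k : nat) (w : nat -> seq (pt d)),
      P [set t | forall j : nat, (j < k)%N -> X j t = w j] =
      (\prod_(j < k) PiB phi rho Omega (w j))%:E.
Hypothesis HXmeas : forall (j : nat) (w : seq (pt d)), measurable [set t | X j t = w].

Definition Cyl k (u : nat -> seq (pt d)) : set T := [set t | forall j, (j < k)%N -> X j t = u j].

Lemma Cyl_meas k u : measurable (Cyl k u).
Proof.
elim: k => [|k IH].
  have -> : Cyl 0 u = setT by apply/seteqP; split => t //= _ j.
  exact: measurableT.
have -> : Cyl k.+1 u = Cyl k u `&` [set t | X k t = u k].
  apply/seteqP; split => t /=.
  - move=> H; split; last exact: H.
    by move=> j Hj; apply: H; exact: leqW.
  - move=> [H1 H2] j; rewrite ltnS leq_eqVlt => /orP[/eqP ->//|]; exact: H1.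
exact: measurableI.
Qed.

Definition tset k (Q : pred (seq (seq (pt d)))) : set T :=
  [set t | Q (mkseq (fun j => X j t) k)].
Definition Gfam k (Q : pred (seq (seq (pt d)))) (u : seq (seq (pt d))) : set T :=
  if Q u && (size u == k) then Cyl k (nth [::] u) else set0.
Definition Ffam k (Q : pred (seq (seq (pt d)))) (m : nat) : set T :=
  if unpickle m is Some u then Gfam k Q u else set0.

Lemma tset_bigcup k (Q : pred (seq (seq (pt d)))) : tset k Q = \bigcup_m Ffam k Q m.
Proof.
apply/seteqP; split => t /=.
- move=> HQ; exists (pickle (mkseq (fun j => X j t) k)) => //.
  rewrite /Ffam pickleK /Gfam HQ size_mkseq eqxx /=.
  by move=> j Hj; rewrite nth_mkseq.
- case=> m _; rewrite /Ffam; case: (unpickle m) => [u|] //.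
  rewrite /Gfam; case: ifP => // /andP[HQ /eqP Hs] Hc.
  by rewrite /tset /= (mkseq_ext _ _ _ Hs Hc).
Qed.

Lemma Ffam_meas k (Q : pred (seq (seq (pt d)))) m : measurable (Ffam k Q m).
Proof.
rewrite /Ffam; case: unpickle => [u|]; last exact: measurable0.
rewrite /Gfam; case: ifP => _; [exact: Cyl_meas | exact: measurable0].
Qed.

Lemma tset_meas k (Q : pred (seq (seq (pt d)))) : measurable (tset k Q).
Proof. rewrite tset_bigcup; apply: bigcupT_measurable => m; exact: Ffam_meas. Qed.

Lemma tset_null k (Q : pred (seq (seq (pt d)))) :
  (forall u, Q u -> size u = k -> \prod_(j < k) PiB phi rho Omega (nth [::] u j) = 0) ->
  P (tset k Q) = 0.
Proof.
move=> H0; apply/(negligibleP _ (tset_meas k Q)); rewrite tset_bigcup.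
apply: negligible_bigcup => m; exists (Ffam k Q m); split => //; first exact: Ffam_meas.
rewrite /Ffam; case: unpickle => [u|]; last exact: measure0.
rewrite /Gfam; case: ifP => [/andP[HQ /eqP Hs]|_]; last exact: measure0.
rewrite /Cyl; apply: eq_trans (HXlaw k (nth [::] u)) _; by rewrite H0.
Qed.

Lemma sandwich (U S N : set T) : measurable U -> measurable S -> measurable N ->
  P N = 0 -> U `<=` S -> S `<=` U `|` N -> P S = P U.
Proof.
move=> mU mS mN N0 US SUN; apply/eqP; rewrite eq_le; apply/andP; split.
  apply: (le_trans (le_measure P (mem_set mS) (mem_set (measurableU _ _ mU mN)) SUN)).
  rewrite le_eqVlt; apply/orP; left; apply/eqP.
  exact: (@measureU0 _ _ _ P U N mU mN N0).
apply: (le_trans (le_measure P (mem_set mU) (mem_set mS) US)); exact: lexx.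
Qed.

Lemma in_bigsetU {I : eqType} (s : seq I) (p : pred I) (D : I -> set T) t :
  (\big[setU/set0]_(g <- s | p g) D g) t -> exists2 g, g \in s & p g /\ D g t.
Proof.
elim: s => [|g s IH]; first by rewrite big_nil.
rewrite big_cons; case: ifP => pg.
  case => [Dg|/IH[g' g's H]]; first by exists g; rewrite ?mem_head.
  by exists g' => //; rewrite in_cons g's orbT.
by move/IH=> [g' g's H]; exists g' => //; rewrite in_cons g's orbT.
Qed.

Lemma to_bigsetU {I : eqType} (s : seq I) (p : pred I) (D : I -> set T) t g :
  g \in s -> p g -> D g t -> (\big[setU/set0]_(g <- s | p g) D g) t.
Proof.
elim: s => [//|g' s IH]; rewrite in_cons big_cons => /orP[/eqP <-|gs] pg Dg.
  by rewrite pg; left.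
by case: ifP => _; [right|]; apply: IH.
Qed.

Lemma measure_bigU (s : seq (seq (pt d))) (p : pred (seq (pt d))) (D : seq (pt d) -> set T) :
  uniq s -> (forall g, measurable (D g)) ->
  (forall g g' t, p g -> p g' -> D g t -> D g' t -> g = g') ->
  P (\big[setU/set0]_(g <- s | p g) D g) = (\sum_(g <- s | p g) P (D g))%E.
Proof.
elim: s => [_|g s IH] /=; first by rewrite !big_nil measure0.
case/andP=> gs us Dm Dd; rewrite !big_cons; case: ifP => pg; last exact: IH.
have disj : D g `&` \big[setU/set0]_(g <- s | p g) D g = set0.
  apply/seteqP; split => // t [Dgt] /in_bigsetU[g' g's [pg' Dg't]].
  by have E := Dd _ _ _ pg pg' Dgt Dg't; rewrite E g's in gs.
have E := measureU P (Dm g) (bigsetU_measurable s (fun i _ => Dm i)) disj.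
apply: eq_trans E _; congr (_ + _); exact: IH.
Qed.

End Meas.


Section Main.
Context {R : realType} {d : nat} (Omega : seq (pt d)) (phi : nat -> R) (rho : pt d -> R)
  {dT : measure_display} {T : measurableType dT} (P : probability T R)
  (X : nat -> T -> seq (pt d)).
Hypothesis Hphi1 : phi 1%N = 0.
Hypothesis HXlaw : forall (k : nat) (w : nat -> seq (pt d)),
      P [set t | forall j : nat, (j < k)%N -> X j t = w j] =
      (\prod_(j < k) PiB phi rho Omega (w j))%:E.
Hypothesis HXmeas : forall (j : nat) (w : seq (pt d)), measurable [set t | X j t = w].

Definition DP (g : seq (pt d)) : pred (seq (seq (pt d))) :=
  fun ws => all (is_irr_bridge Omega) ws && (concatw ws == g).

Definition dec (g : seq (pt d)) : seq (seq (pt d)) :=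
  match pselect (exists ws, DP g ws) with
  | left H => xchoose H
  | right _ => [::]
  end.

Lemma decP {g} : (exists ws, DP g ws) -> DP g (dec g).
Proof. by rewrite /dec; case: pselect => // H _; exact: xchooseP. Qed.

Definition Cg (g : seq (pt d)) : set T := Cyl X (size (dec g)) (nth [::] (dec g)).

Lemma Cg_sub n g t : (0 < n)%N -> is_bridge Omega n g -> Cg g t ->
  renewal_set (fun j => X j t) n /\ mkseq (inf_walk (fun j => X j t)) n.+1 = g.
Proof.
move=> n0 Hg Hct.
have /andP[Hall /eqP Hc] := decP (decomp_exists n0 Hg).
have [gs _ _ _] := bridgeP.1 Hg.
have Hlen : lens (dec g) = n.
  by have := congr1 size Hc; rewrite size_concat gs => -[].
have Ht : mkseq (fun j => X j t) (size (dec g)) = dec g := mkseq_ext _ _ _ erefl Hct.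
have Hpos : forall j, (j < size (dec g))%N -> (0 < wlen (X j t))%N.
  move=> j Hj; rewrite Hct //; move/(all_nthP [::]): Hall => /(_ j Hj).
  by case/irrP.
have Hsum : (\sum_(j < size (dec g)) wlen (X j t))%N = n.
  by have := sum_wlen_mkseq (fun j => X j t) (size (dec g)); rewrite Ht Hlen => E; exact: esym E.
split.
  exists (size (dec g)); split; last by rewrite Hsum.
  rewrite lt0n; apply/eqP => Hk0; move: Hsum; rewrite Hk0 big_ord0 => E.
  by rewrite -E in n0.
by rewrite -Hsum mkseq_inf // prefix_walkE Ht.
Qed.

Lemma E_notN n t : (0 < n)%N -> renewal_set (fun j => X j t) n ->
  all (is_irr_bridge Omega) (mkseq (fun j => X j t) n) ->
  exists g, [/\ is_bridge Omega n g, mkseq (inf_walk (fun j => X j t)) n.+1 = g & Cg g t].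
Proof.
move=> n0 [k [k0 Hk]] /(all_nthP [::]) Hirr.
have Hirr' : forall j, (j < n)%N -> is_irr_bridge Omega (X j t).
  by move=> j Hj; have := Hirr j; rewrite size_mkseq nth_mkseq //; apply.
have [k' [k'0 k'n Hk']] : exists k', [/\ (0 < k')%N, (k' <= n)%N &
    n = (\sum_(j < k') wlen (X j t))%N].
  case: (leqP k n) => Hkn; first by exists k.
  exists n; split => //.
  have H1 := sum_mono (fun j => wlen (X j t)) _ _ (ltnW Hkn); rewrite -Hk in H1.
  have H2 : (n <= \sum_(j < n) wlen (X j t))%N.
    by apply: (@sum_ge_card (fun j => wlen (X j t)) n) => j Hj; case/irrP: (Hirr' j Hj).
  by apply/eqP; rewrite eqn_leq H2 H1.
set ws := mkseq (fun j => X j t) k'.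
have Hws : all (is_irr_bridge Omega) ws.
  apply/allP => w /mapP[j]; rewrite mem_iota add0n => /andP[_ Hj] ->.
  apply: Hirr'; exact: leq_trans Hj k'n.
have Hpos : forall j, (j < k')%N -> (0 < wlen (X j t))%N.
  by move=> j Hj; case/irrP: (Hirr' j (leq_trans Hj k'n)).
have Hlen : lens ws = n by rewrite sum_wlen_mkseq.
have Hg := bridge_concat Hws; rewrite Hlen in Hg.
exists (concatw ws); split => //.
  by rewrite Hk' mkseq_inf // prefix_walkE.
have /andP[Hd /eqP Hdc] : DP (concatw ws) (dec (concatw ws)).
  by apply: decP; exists ws; rewrite /DP Hws eqxx.
have Edec : dec (concatw ws) = ws := concat_uniq Hd Hws Hdc.
by rewrite /Cg Edec size_mkseq => j Hj; rewrite nth_mkseq.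
Qed.

Lemma PCg n g : (0 < n)%N -> is_bridge Omega n g ->
  P (Cg g) = (sigma phi rho g * expR (- lambda0 phi rho Omega * n%:R))%:E.
Proof.
move=> n0 Hg; have /andP[Hall /eqP Hc] := decP (decomp_exists n0 Hg).
have [gs _ _ _] := bridgeP.1 Hg.
have Hlen : lens (dec g) = n.
  by have := congr1 size Hc; rewrite size_concat gs => -[].
rewrite /Cg /Cyl; apply: eq_trans (HXlaw _ _) _; congr EFin.
set ws := dec g in Hall Hc Hlen *.
have -> : (\prod_(j < size ws) PiB phi rho Omega (nth [::] ws j)) =
          \prod_(w <- ws) PiB phi rho Omega w.
  by rewrite [RHS](big_nth [::]) big_mkord.
rewrite (eq_big_seq (fun w => sigma phi rho w * expR (- lambda0 phi rho Omega * (wlen w)%:R))).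
  rewrite big_split /= -(sigma_concat Omega phi rho Hphi1 ws Hall) Hc; congr (_ * _).
  rewrite -expR_sum; congr expR; rewrite -mulr_sumr -natr_sum.
  by rewrite -Hlen /lens sumnE big_map.
by move=> w Hw; rewrite /PiB (allP Hall w Hw).
Qed.

End Main.


Theorem lemma7 (R : realType) (d : nat) (Omega : seq (pt d))
  (phi : nat -> R) (rho : pt d -> R)
  (HOmega0 : 0 \notin Omega)
  (HOmega_sym : forall (s : {perm 'I_(d.+1)}) (e : 'I_(d.+1) -> bool) (v : pt d),
      v \in Omega -> sym_apply s e v \in Omega)
  (Hphi_ge0 : forall a : nat, 0 <= phi a)
  (Hphi0 : phi 0%N = 0) (Hphi1 : phi 1%N = 0)
  (Hphi_sup : forall a b : nat, phi a + phi b <= phi (a + b)%N)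
  (Hrho_ge0 : forall v, v \in Omega -> 0 <= rho v)
  (Hrho_sum : \sum_(v <- undup Omega) rho v = 1)
  (Hrho_sym : forall (s : {perm 'I_(d.+1)}) (e : 'I_(d.+1) -> bool) (v : pt d),
      v \in Omega -> rho (sym_apply s e v) = rho v)
  (* gamma_1, gamma_2, ... (here X 0, X 1, ...) i.i.d. with law P_iB *)
  (dT : measure_display) (T : measurableType dT) (P : probability T R)
  (X : nat -> T -> seq (pt d))
  (HXmeas : forall (j : nat) (w : seq (pt d)), measurable [set t | X j t = w])
  (HXlaw : forall (k : nat) (w : nat -> seq (pt d)),
      P [set t | forall j : nat, (j < k)%N -> X j t = w j] =
      (\prod_(j < k) PiB phi rho Omega (w j))%:E)
  (n : nat) (Hn : (0 < n)%N) (A : pred (seq (pt d)))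
  (HA : forall g, A g -> is_bridge Omega n g) :
  PBn phi rho Omega n A =
  condprob P
    [set t | A (mkseq (inf_walk (fun j => X j t)) n.+1)]
    [set t | renewal_set (fun j => X j t) n].
Proof.
set F := [set t | A _]; set E := [set t | renewal_set _ n].
set N := tset X n (fun u => ~~ all (is_irr_bridge Omega) u).
set e := expR (- lambda0 phi rho Omega * n%:R).
set UA := \big[setU/set0]_(g <- Wn Omega n | is_bridge Omega n g && A g) Cg Omega X g.
set UB := \big[setU/set0]_(g <- Wn Omega n | is_bridge Omega n g) Cg Omega X g.
have mC : forall g, measurable (Cg Omega X g) by move=> g; apply: (Cyl_meas X HXmeas).
have mN : measurable N by apply: (tset_meas X HXmeas).
have N0 : P N = 0.
  apply: (tset_null _ _ _ _ _ HXlaw HXmeas) => u Hu Hs.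
  rewrite -has_predC in Hu; case/(has_nthP [::]): Hu => j Hj Hnot.
  rewrite Hs in Hj.
  by rewrite (bigD1 (Ordinal Hj)) //= /PiB (negbTE Hnot) mul0r.
have mE : measurable E.
  have -> : E = \bigcup_k tset X k (fun u => (0 < k)%N && (lens u == n)).
    apply/seteqP; split => t /=.
      case=> k [k0 Hk]; exists k => //.
      by rewrite /tset /= k0 sum_wlen_mkseq -Hk eqxx.
    case=> k _; rewrite /tset /= => /andP[k0 /eqP Hk]; exists k; split => //.
    by rewrite -Hk sum_wlen_mkseq.
  by apply: bigcupT_measurable => k; apply: (tset_meas X HXmeas).
have EF : forall t, mkseq (inf_walk (fun j => nth [::] (mkseq (fun j => X j t) n) j)) n.+1
    = mkseq (inf_walk (fun j => X j t)) n.+1.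
  move=> t; apply/eq_in_map => i; rewrite mem_iota add0n ltnS => /andP[_ Hi].
  by apply: inf_walk_ext Hi => j Hj; rewrite nth_mkseq.
have mF : measurable F.
  have -> : F = tset X n (fun u => A (mkseq (inf_walk (fun j => nth [::] u j)) n.+1)).
    by apply/seteqP; split => t; rewrite /tset /= EF.
  by apply: (tset_meas X HXmeas).
have mUA : measurable UA by apply: bigsetU_measurable => g _; apply: mC.
have mUB : measurable UB by apply: bigsetU_measurable => g _; apply: mC.
have disj : forall g g' t, is_bridge Omega n g -> is_bridge Omega n g' ->
    Cg Omega X g t -> Cg Omega X g' t -> g = g'.
  move=> g g' t Hg Hg' H1 H2.
  have [_ E1] := Cg_sub _ _ _ _ _ Hn Hg H1; have [_ E2] := Cg_sub _ _ _ _ _ Hn Hg' H2.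
  by rewrite -E1 -E2.
have PUA : P UA = ((\sum_(g <- Wn Omega n | is_bridge Omega n g && A g)
    sigma phi rho g) * e)%:E.
  apply: eq_trans (measure_bigU _ _ _ _ (Wn_uniq _ _) mC _) _.
    by move=> g g' t /andP[Hg _] /andP[Hg' _]; apply: disj.
  rewrite mulr_suml -sumEFin; apply: eq_bigr => g /andP[Hg _].
  exact: (PCg _ _ _ _ _ Hphi1 HXlaw _ _ Hn Hg).
have PUB : P UB = ((\sum_(g <- Wn Omega n | is_bridge Omega n g)
    sigma phi rho g) * e)%:E.
  apply: eq_trans (measure_bigU _ _ _ _ (Wn_uniq _ _) mC _) _.
    by move=> g g' t Hg Hg'; apply: disj.
  rewrite mulr_suml -sumEFin; apply: eq_bigr => g Hg.
  exact: (PCg _ _ _ _ _ Hphi1 HXlaw _ _ Hn Hg).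
have PFE : P (F `&` E) = P UA.
  apply: (sandwich _ _ _ _ mUA (measurableI _ _ mF mE) mN N0).
    move=> t /in_bigsetU[g gW [/andP[Hg Ag] Ct]].
    have [HE Hgt] := Cg_sub _ _ _ _ _ Hn Hg Ct; split => //.
    by rewrite /F /= Hgt.
  move=> t [Ft Et].
  case: (boolP (all (is_irr_bridge Omega) (mkseq (fun j => X j t) n))) => Hall;
    last by right.
  left; have [g [Hg Hgt Ct]] := E_notN _ _ _ _ Hn Et Hall.
  apply: (to_bigsetU _ _ _ _ _ (bridge_in_Wn _ _ _ Hg)) Ct.
  by rewrite Hg /=; move: Ft; rewrite /F /= Hgt.
have PE : P E = P UB.
  apply: (sandwich _ _ _ _ mUB mE mN N0).
    move=> t /in_bigsetU[g gW [Hg Ct]].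
    by have [HE Hgt] := Cg_sub _ _ _ _ _ Hn Hg Ct.
  move=> t Et.
  case: (boolP (all (is_irr_bridge Omega) (mkseq (fun j => X j t) n))) => Hall;
    last by right.
  left; have [g [Hg Hgt Ct]] := E_notN _ _ _ _ Hn Et Hall.
  exact: (to_bigsetU _ _ _ _ _ (bridge_in_Wn _ _ _ Hg)) Ct.
rewrite /condprob PFE PE PUA PUB /= /PBn.
have e0 : e != 0 by rewrite gt_eqF // expR_gt0.
by rewrite invfM mulrACA divff // mulr1.
Qed.
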